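(* Let $\mathbf{X}^{(1)}$ and $\mathbf{X}^{(2)}$ be $p$-variate random vectors with absolutely continuous distributions (populations $\Pi^{(1)}$, $\Pi^{(2)}$, with prior probabilities $\pi_1,\pi_2$). Fix a unit vector $\mathbf{u}\in\mathbb{R}^p$ and $\theta\in(0,1)$, and let $Q_Z^{(k)}(\theta;\mathbf{u})$ be the $\theta$-quantile of the continuous random variable $Z^{(k)}=\mathbf{u}^{\top}\mathbf{X}^{(k)}$, $k=1,2$. Let $Q_{\alpha}(\theta;\mathbf{u})=\min\{Q_Z^{(1)}(\theta;\mathbf{u}),Q_Z^{(2)}(\theta;\mathbf{u})\}$, and let $G_\alpha(\cdot;\mathbf{u})$, $g_\alpha(\cdot;\mathbf{u})$ and $\pi_\alpha$ be the distribution function (whose inverse gives $Q_\alpha$), density and prior probability of the population attaining this minimum; similarly let $Q_{\beta}(\theta;\mathbf{u})=\max\{Q_Z^{(1)}(\theta;\mathbf{u}),Q_Z^{(2)}(\theta;\mathbf{u})\}$ with corresponding $G_\beta(\cdot;\mathbf{u})$, $g_\beta(\cdot;\mathbf{u})$, $\pi_\beta$ for the other population. Consider the directional quantile classifier which assigns a new observation $\mathbf{y}$ to $\Pi^{(1)}$ if $\Phi^{(2)}(\theta;\mathbf{u}^{\top}\mathbf{y})-\Phi^{(1)}(\theta;\mathbf{u}^{\top}\mathbf{y})>0$ and to $\Pi^{(2)}$ otherwise. Then its probability of correct classification is $$\psi(\theta)=\pi_\alpha G_\alpha(\tilde Q(\theta;\mathbf{u});\mathbf{u})+\pi_\beta\{1-G_\beta(\tilde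 Q(\theta;\mathbf{u});\mathbf{u})\},$$ where $\tilde Q(\theta;\mathbf{u})=\theta Q_\alpha(\theta;\mathbf{u})+(1-\theta)Q_\beta(\theta;\mathbf{u})$, and analogously its misclassification rate is $$1-\psi(\theta)=\pi_\alpha\{1-G_\alpha(\tilde Q(\theta;\mathbf{u});\mathbf{u})\}+\pi_\beta G_\beta(\tilde Q(\theta;\mathbf{u});\mathbf{u}).$$
   Context: For $k=1,2$ and a real number $z$, $\Phi^{(k)}(\theta;z)=\{\theta+(1-2\theta)I(z-Q_Z^{(k)}(\theta;\mathbf{u})<0)\}\,|z-Q_Z^{(k)}(\theta;\mathbf{u})|$, where $I(\cdot)$ is the indicator function. The $\theta$-quantile $Q_Z^{(k)}(\theta;\mathbf{u})$ is the $\theta$th directional quantile of $\mathbf{X}^{(k)}$ in direction $\mathbf{u}$. *)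

(* Defs.v *)
From HB Require Import structures.
From mathcomp Require Import all_boot all_order all_algebra.
From mathcomp Require Import all_classical all_reals all_analysis.
Set Implicit Arguments. Unset Strict Implicit. Unset Printing Implicit Defensive.
Import Order.TTheory GRing.Theory Num.Theory.
Local Open Scope classical_set_scope.
Local Open Scope ring_scope.

Definition inner (R : realType) (p : nat) (u x : 'rV[R]_p) : R :=
  \sum_(i < p) u 0 i * x 0 i.

Definition check_loss (R : realType) (theta z Q : R) : R :=
  (theta + (1 - 2 * theta) * ((z - Q < 0)%R : bool)%:R) * `|z - Q|.

Definition rV_lebesgue_null (R : realType) (p : nat) (A : set 'rV[R]_p) : Prop :=
  forall e : R, 0 < e ->
  exists a b : nat -> 'rV[R]_p,
    [/\ (forall n i, a n 0 i <= b n 0 i),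
        A `<=` \bigcup_n [set x | forall i, a n 0 i <= x 0 i <= b n 0 i]
      & (forall N, \sum_(n < N) \prod_(i < p) (b n 0 i - a n 0 i) <= e)].

Definition quantile (R : realType) (G : R -> R) (theta : R) : R :=
  inf [set x | theta <= G x].

Definition pop1 : 'I_2 := ord0.
Definition pop2 : 'I_2 := ord_max.

(* Main.v *)
Require Import Defs.
From HB Require Import structures.
From mathcomp Require Import all_boot all_order all_algebra.
From mathcomp Require Import all_classical all_reals all_analysis.
Import Order.TTheory GRing.Theory Num.Theory.
Local Open Scope classical_set_scope.
From mathcomp Require Import lra.
Local Open Scope ring_scope.

Section M.
Context (R : realType) (d : measure_display) (T : measurableType d) (P : probability T R).

Lemma mle (f : T -> R) c : measurable_fun setT f -> measurable [set t | f t <= c].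
Proof.
move=> mf; have := mf measurableT _ (measurable_itv `]-oo, c]).
rewrite setTI; congr measurable; apply/seteqP; split=> t /=; by rewrite in_itv.
Qed.

Lemma mlt (f : T -> R) c : measurable_fun setT f -> measurable [set t | f t < c].
Proof.
move=> mf; have := mf measurableT _ (measurable_itv `]-oo, c[).
rewrite setTI; congr measurable; apply/seteqP; split=> t /=; by rewrite in_itv.
Qed.

Lemma meq (f : T -> R) c : measurable_fun setT f -> measurable [set t | f t = c].
Proof.
move=> mf; have := mf measurableT _ (measurable_set1 c).
by rewrite setTI.
Qed.

Lemma Plt (f : T -> R) c : measurable_fun setT f -> P [set t | f t = c] = 0%E ->
  P [set t | f t < c] = P [set t | f t <= c].
Proof.
move=> mf h0.
have -> : [set t | f t <= c] = [set t | f t < c] `|` [set t | f t = c].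
  apply/seteqP; split=> t /=; first by rewrite le_eqVlt => /orP[/eqP->|->]; [right|left].
  by case=> [/ltW|->].
rewrite measureU; first by rewrite /= h0 adde0.
idtac.
- exact: mlt.
- exact: meq.
by apply/seteqP; split=> t // [/= + e]; rewrite e ltxx.
Qed.

Lemma fine_lt (f : T -> R) c : measurable_fun setT f -> P [set t | f t = c] = 0%E ->
  fine (P [set t | f t < c]) = fine (P [set t | f t <= c]).
Proof. by move=> mf h; rewrite Plt. Qed.

Lemma fine_gt (f : T -> R) c : measurable_fun setT f -> P [set t | f t = c] = 0%E ->
  fine (P [set t | c < f t]) = 1 - fine (P [set t | f t <= c]).
Proof.
move=> mf h.
have -> : [set t | c < f t] = ~` [set t | f t <= c].
  by apply/seteqP; split=> t /=; rewrite real_ltNge ?num_real // => /negP.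
rewrite probability_setC; last exact: mle.
by rewrite fineB ?fin_num_measure //; exact: mle.
Qed.

Lemma fine_nlt (f : T -> R) c : measurable_fun setT f -> P [set t | f t = c] = 0%E ->
  fine (P [set t | ~~ (f t < c)]) = 1 - fine (P [set t | f t <= c]).
Proof.
move=> mf h.
have -> : [set t | ~~ (f t < c)] = ~` [set t | f t < c].
  by apply/seteqP; split=> t /= /negP.
rewrite probability_setC; last exact: mlt.
by rewrite fineB ?fin_num_measure // ?Plt //; exact: mlt.
Qed.

Lemma fine_ngt (f : T -> R) c : measurable_fun setT f -> P [set t | f t = c] = 0%E ->
  fine (P [set t | ~~ (c < f t)]) = fine (P [set t | f t <= c]).
Proof.
move=> mf h; congr (fine (P _)).
by apply/seteqP; split=> t /=; rewrite -real_leNgt ?num_real.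
Qed.
End M.
Lemma ckE (R : realType) (th z q : R) :
  check_loss th z q = if z < q then (1 - th) * (q - z) else th * (z - q).
Proof.
rewrite /check_loss subr_lt0; case: ltP => h /=.
  rewrite ltr0_norm ?subr_lt0 //; lra.
rewrite ger0_norm ?subr_ge0 //; lra.
Qed.

Lemma key1 (R : realType) (th z q1 q2 : R) : 0 < th < 1 -> q1 < q2 ->
  (0 < check_loss th z q2 - check_loss th z q1) = (z < th * q1 + (1 - th) * q2).
Proof.
move=> /andP[t0 t1] hq; rewrite !ckE.
case: (ltP z q1) => h1; case: (ltP z q2) => h2; apply/idP/idP => H; nra.
Qed.

Lemma key2 (R : realType) (th z q1 q2 : R) : 0 < th < 1 -> q2 < q1 ->
  (0 < check_loss th z q2 - check_loss th z q1) = (th * q2 + (1 - th) * q1 < z).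
Proof.
move=> /andP[t0 t1] hq; rewrite !ckE.
case: (ltP z q1) => h1; case: (ltP z q2) => h2; apply/idP/idP => H; nra.
Qed.
Theorem lemma1 (R : realType) (d : measure_display) (T : measurableType d)
  (P : probability T R) (p : nat) (X : 'I_2 -> T -> 'rV[R]_p)
  (pi : 'I_2 -> R) (u : 'rV[R]_p) (theta : R) :
  (forall k i, measurable_fun setT (fun t => X k t 0 i)) ->
  (* absolutely continuous p-variate distributions *)
  (forall k (A : set 'rV[R]_p), rV_lebesgue_null A -> P.-negligible (X k @^-1` A)) ->
  (* Z^(k) = u^T X^(k) is a continuous random variable *)
  (forall k c, P [set t | inner u (X k t) = c] = 0%E) ->
  (forall k, 0 <= pi k) -> pi pop1 + pi pop2 = 1 ->
  inner u u = 1 ->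
  0 < theta < 1 ->
  let Z k t := inner u (X k t) in
  let G k x := fine (P [set t | Z k t <= x]) in
  let Q k := quantile (G k) theta in
  let Phi k z := check_loss theta z (Q k) in
  let assign1 (y : 'rV[R]_p) := 0 < Phi pop2 (inner u y) - Phi pop1 (inner u y) in
  let psi := pi pop1 * fine (P [set t | assign1 (X pop1 t)])
           + pi pop2 * fine (P [set t | ~~ assign1 (X pop2 t)]) in
  Q pop1 != Q pop2 ->
  forall a b : 'I_2, a != b ->
  Q a = Num.min (Q pop1) (Q pop2) -> Q b = Num.max (Q pop1) (Q pop2) ->
  let Qt := theta * Q a + (1 - theta) * Q b in
  psi = pi a * G a Qt + pi b * (1 - G b Qt) /\
  1 - psi = pi a * (1 - G a Qt) + pi b * G b Qt.
Proof.
move=> hX hN hC hpi hpi1 hu hth Z G Q Phi assign1 psi hQ a b hab hQa hQb Qt.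
have mZ k : measurable_fun setT (Z k).
  rewrite /Z /inner; apply: measurable_sum => i.
  exact: (measurable_realfun.measurable_funM (measurable_cst (u 0 i)) (hX k i)).
have hZ k c : P [set t | Z k t = c] = 0%E := hC k c.
have two (c : 'I_2) : c = pop1 \/ c = pop2.
  case: c => [[|[|n]] hc]; [left|right|by []]; exact: val_inj.
have [h12|h21] : Q pop1 < Q pop2 \/ Q pop2 < Q pop1.
  by case: (ltgtP (Q pop1) (Q pop2)) hQ => // _; [left|right].
- have ha : a = pop1.
    case: (two a) => // ha; move: hQa; rewrite ha minEle (ltW h12) => e.
    by move: h12; rewrite e ltxx.
  have hb : b = pop2.
    case: (two b) => // hb; by move: hab; rewrite ha hb eqxx.
  subst a b.
  have eA : forall y, assign1 y = (inner u y < Qt) := fun y => @key1 _ theta (inner u y) _ _ hth h12.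
  have E1 : [set t | assign1 (X pop1 t)] = [set t | Z pop1 t < Qt].
    by apply/seteqP; split=> t; rewrite /= eA.
  have E2 : [set t | ~~ assign1 (X pop2 t)] = [set t | ~~ (Z pop2 t < Qt)].
    by apply/seteqP; split=> t; rewrite /= eA.
  rewrite /psi E1 E2 fine_lt // fine_nlt //; rewrite /G.
  split; nra.
- have ha : a = pop2.
    case: (two a) => // ha; move: hQa; rewrite ha minEle leNgt h21 /= => e.
    by move: h21; rewrite e ltxx.
  have hb : b = pop1.
    case: (two b) => // hb; by move: hab; rewrite ha hb eqxx.
  subst a b.
  have eA : forall y, assign1 y = (Qt < inner u y) := fun y => @key2 _ theta (inner u y) _ _ hth h21.
  have E1 : [set t | assign1 (X pop1 t)] = [set t | Qt < Z pop1 t].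
    by apply/seteqP; split=> t; rewrite /= eA.
  have E2 : [set t | ~~ assign1 (X pop2 t)] = [set t | ~~ (Qt < Z pop2 t)].
    by apply/seteqP; split=> t; rewrite /= eA.
  rewrite /psi E1 E2 fine_gt // fine_ngt //; rewrite /G.
  split; nra.
Qed.
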